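(* Let $Y$ be a Banach space and $K\subset Y$ a closed convex normal cone. Let $\alpha:\mathbb{R}_+\to\mathbb{R}_+$ be nondecreasing with $\lim_{t\to0^+}\alpha(t)/t=0$, and let $k_0\in K$. Let $\Phi:(0,\infty)\to Y$ satisfy: (i) $\Phi(t)\in K$ for all $t>0$; (ii) $\Phi(t)-\Phi(t_1)+\frac{\alpha(t_1)}{t_1}k_0\in K$ whenever $0<t_1<t$; (iii) $\Phi(t)$ converges weakly to $0$ as $t\to0^+$. Then $\|\Phi(t)\|\to0$ as $t\to0^+$.
   Context: A cone $K$ in a normed space $Y$ is normal if there is a constant $c>0$ such that $0\le_K x\le_K y$ implies $\|x\|\le c\|y\|$, where $x\le_K y$ means $y-x\in K$. *)

(* Defs.v *)
From Stdlib Require Import Reals Lra.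
Open Scope R_scope.

Record NormedSpace := {
  carrier :> Type;
  vzero : carrier;
  vadd : carrier -> carrier -> carrier;
  vopp : carrier -> carrier;
  vscal : R -> carrier -> carrier;
  vnorm : carrier -> R;
  vadd_assoc : forall x y z, vadd x (vadd y z) = vadd (vadd x y) z;
  vadd_comm : forall x y, vadd x y = vadd y x;
  vadd_0 : forall x, vadd x vzero = x;
  vadd_opp : forall x, vadd x (vopp x) = vzero;
  vscal_assoc : forall a b x, vscal a (vscal b x) = vscal (a * b) x;
  vscal_1 : forall x, vscal 1 x = x;
  vscal_distr_l : forall a x y, vscal a (vadd x y) = vadd (vscal a x) (vscal a y);
  vscal_distr_r : forall a b x, vscal (a + b) x = vadd (vscal a x) (vscal b x);
  vnorm_eq0 : forall x, vnorm x = 0 -> x = vzero;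
  vnorm_scal : forall a x, vnorm (vscal a x) = Rabs a * vnorm x;
  vnorm_triangle : forall x y, vnorm (vadd x y) <= vnorm x + vnorm y
}.

Arguments vzero {_}.
Arguments vadd {_} _ _.
Arguments vopp {_} _.
Arguments vscal {_} _ _.
Arguments vnorm {_} _.

Definition vsub {Y : NormedSpace} (x y : Y) : Y := vadd x (vopp y).

Definition is_Banach (Y : NormedSpace) : Prop :=
  forall u : nat -> Y,
    (forall eps, eps > 0 -> exists N, forall m n, (m >= N)%nat -> (n >= N)%nat ->
        vnorm (vsub (u m) (u n)) < eps) ->
    exists l : Y, forall eps, eps > 0 -> exists N, forall n, (n >= N)%nat ->
        vnorm (vsub (u n) l) < eps.

Definition cone_le {Y : NormedSpace} (K : Y -> Prop) (x y : Y) : Prop := K (vsub y x).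

Definition is_cone {Y : NormedSpace} (K : Y -> Prop) : Prop :=
  K vzero /\ forall a x, 0 <= a -> K x -> K (vscal a x).

Definition is_convex {Y : NormedSpace} (K : Y -> Prop) : Prop :=
  forall x y t, K x -> K y -> 0 <= t <= 1 ->
    K (vadd (vscal t x) (vscal (1 - t) y)).

(* Closed in the norm topology (sequentially closed, equivalent in metric spaces). *)
Definition is_closed {Y : NormedSpace} (K : Y -> Prop) : Prop :=
  forall (u : nat -> Y) (l : Y), (forall n, K (u n)) ->
    (forall eps, eps > 0 -> exists N, forall n, (n >= N)%nat -> vnorm (vsub (u n) l) < eps) ->
    K l.

Definition is_normal {Y : NormedSpace} (K : Y -> Prop) : Prop :=
  exists c, c > 0 /\ forall x y, cone_le K vzero x -> cone_le K x y ->
    vnorm x <= c * vnorm y.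

Definition is_cont_linear_functional {Y : NormedSpace} (f : Y -> R) : Prop :=
  (forall x y, f (vadd x y) = f x + f y) /\
  (forall a x, f (vscal a x) = a * f x) /\
  (exists M, forall x, Rabs (f x) <= M * vnorm x).

Definition lim_0plus (g : R -> R) (l : R) : Prop :=
  forall eps, eps > 0 -> exists delta, delta > 0 /\
    forall t, 0 < t < delta -> Rabs (g t - l) < eps.

Definition weak_lim_0plus_zero {Y : NormedSpace} (Phi : R -> Y) : Prop :=
  forall f : Y -> R, is_cont_linear_functional f -> lim_0plus (fun t => f (Phi t)) 0.

(* Main.v *)
Require Import Defs.
From Stdlib Require Import Reals Lra ClassicalEpsilon Classical.
From mathcomp Require boolp classical_sets.
Module ZornW.
Import boolp classical_sets.
Lemma zorn_sets (T : Type) (P : (T -> Prop) -> Prop) :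
  (forall F : (T -> Prop) -> Prop, (forall X, F X -> P X) ->
     (forall X Z, F X -> F Z -> (forall z, X z -> Z z) \/ (forall z, Z z -> X z)) ->
     P (fun z => exists X, F X /\ X z)) ->
  exists A, P A /\ forall B, (forall z, A z -> B z) -> ~ (forall z, B z -> A z) -> ~ P B.
Proof.
intros H.
destruct (@Zorn_bigcup T P) as [A [PA HA]].
- intros F FP Ftot. 
  assert (E : (\bigcup_(X in F) X)%classic = (fun z => exists X, F X /\ X z)).
  { apply boolp.funext; intro z; apply boolp.propext; split; [intros [X FX Xz]; eauto| intros [X [FX Xz]]; exists X; auto]. }
  rewrite E. apply H; [exact FP|]. intros X Z FX FZ. destruct (Ftot X Z FX FZ) as [h|h]; [left|right]; exact h.
- exists A; split; auto. intros B AB nBA PB. apply (HA B); auto. split; auto.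
Qed.
End ZornW.
Open Scope R_scope.

Section Vec.
Variable Y : NormedSpace.
Implicit Types x y z w : Y.

Lemma vadd_0l x : vadd vzero x = x.
Proof. rewrite vadd_comm; apply vadd_0. Qed.
Lemma vopp_l x : vadd (vopp x) x = vzero.
Proof. rewrite vadd_comm; apply vadd_opp. Qed.
Lemma vadd_cancel x y z : vadd x y = vadd x z -> y = z.
Proof.
intros H. rewrite <- (vadd_0l y), <- (vadd_0l z), <- (vopp_l x), <- !vadd_assoc, H; reflexivity.
Qed.
Lemma vscal_0 x : vscal 0 x = vzero.
Proof.
apply (vadd_cancel (vscal 0 x)). rewrite vadd_0, <- vscal_distr_r. f_equal; ring.
Qed.
Lemma vscal_zero a : vscal a (@vzero Y) = vzero.
Proof. rewrite <- (vscal_0 vzero), vscal_assoc; f_equal; ring. Qed.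
Lemma vopp_scal x : vopp x = vscal (-1) x.
Proof.
apply (vadd_cancel x). rewrite vadd_opp. pattern x at 1; rewrite <- (vscal_1 _ x).
rewrite <- vscal_distr_r. replace (1 + -1) with 0 by ring. now rewrite vscal_0.
Qed.
Lemma vnorm_zero : vnorm (@vzero Y) = 0.
Proof. rewrite <- (vscal_0 vzero), vnorm_scal, Rabs_R0; ring. Qed.
Lemma vnorm_opp x : vnorm (vopp x) = vnorm x.
Proof. rewrite vopp_scal, vnorm_scal. replace (Rabs (-1)) with 1 by (rewrite Rabs_left; lra). ring. Qed.
Lemma vnorm_ge0 x : 0 <= vnorm x.
Proof.
pose proof (vnorm_triangle _ x (vopp x)). rewrite vadd_opp, vnorm_zero, vnorm_opp in H. lra.
Qed.
Lemma vsub_0r x : vsub x vzero = x.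
Proof. unfold vsub. rewrite vopp_scal, vscal_zero, vadd_0; reflexivity. Qed.
Lemma vadd_AC x y z : vadd (vadd x y) z = vadd (vadd x z) y.
Proof. rewrite <- !vadd_assoc, (vadd_comm _ y z); reflexivity. Qed.
Lemma vadd_ACA x y z w : vadd (vadd x y) (vadd z w) = vadd (vadd x z) (vadd y w).
Proof. rewrite <- !vadd_assoc. f_equal. rewrite !vadd_assoc. f_equal. apply vadd_comm. Qed.
Lemma vscal_sum a b x : vadd (vscal a x) (vscal b x) = vscal (a + b) x.
Proof. now rewrite vscal_distr_r. Qed.
Lemma vscal_opp a x : vscal a (vopp x) = vopp (vscal a x).
Proof. rewrite !vopp_scal, !vscal_assoc; f_equal; ring. Qed.
Lemma vopp_add x y : vopp (vadd x y) = vadd (vopp x) (vopp y).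
Proof. rewrite !vopp_scal, vscal_distr_l; reflexivity. Qed.
Lemma vadd_oppK x y : vadd (vadd x y) (vopp y) = x.
Proof. rewrite <- vadd_assoc, vadd_opp, vadd_0; reflexivity. Qed.
End Vec.

Section HB.
Variable Y : NormedSpace.
Variable p : Y -> R.
Hypothesis Hsub : forall x y, p (vadd x y) <= p x + p y.
Hypothesis Hhom : forall t x, 0 < t -> t * p x <= p (vscal t x).

Definition Good (G : Y * R -> Prop) : Prop :=
  (forall x a b, G (x,a) -> G (x,b) -> a = b) /\
  (forall x a y b, G (x,a) -> G (y,b) -> G (vadd x y, a+b)) /\
  (forall s x a, G (x,a) -> G (vscal s x, s*a)) /\
  (forall x a, G (x,a) -> a <= p x).

Lemma vmove (x u y v : Y) : vadd x u = vadd y v -> vadd y (vopp x) = vadd u (vopp v).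
Proof.
intros H.
assert (E: vadd y (vopp x) = vadd (vadd y v) (vadd (vopp x) (vopp v))).
{ rewrite vadd_ACA, (vadd_opp _ v), vadd_0; reflexivity. }
rewrite E, <- H, vadd_ACA, vadd_opp, vadd_0l; reflexivity.
Qed.

Lemma hahn_banach : exists f : Y -> R,
  (forall x y, f (vadd x y) = f x + f y) /\ (forall a x, f (vscal a x) = a * f x) /\
  (forall x, f x <= p x).
Proof.
destruct (ZornW.zorn_sets (Y * R) Good) as [A [GA HA]].
{ intros F FG Ftot. repeat split.
  - intros x a b [X [FX Xa]] [Z [FZ Zb]].
    destruct (Ftot X Z FX FZ) as [h|h].
    + apply (proj1 (FG Z FZ) x); auto.
    + apply (proj1 (FG X FX) x); auto.
  - intros x a y b [X [FX Xa]] [Z [FZ Zb]].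
    destruct (Ftot X Z FX FZ) as [h|h].
    + exists Z; split; auto. apply (proj1 (proj2 (FG Z FZ))); auto.
    + exists X; split; auto. apply (proj1 (proj2 (FG X FX))); auto.
  - intros s x a [X [FX Xa]]. exists X; split; auto. apply (FG X FX); auto.
  - intros x a [X [FX Xa]]. apply (FG X FX); auto. }
destruct GA as [Gfun [Gadd [Gscal Gdom]]].
assert (p0 : 0 <= p vzero).
{ pose proof (Hsub vzero vzero) as h. rewrite vadd_0 in h. lra. }
assert (A0 : A (vzero, 0)).
{ apply NNPP; intro nA0.
  assert (Aempty : forall z, ~ A z).
  { intros [x a] Axa. apply nA0. pose proof (Gscal 0 x a Axa) as h. rewrite vscal_0, Rmult_0_l in h. exact h. }
  apply (HA (fun z => z = (vzero, 0))).
  - intros z Az. exfalso; exact (Aempty z Az).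
  - intros h. apply (Aempty (vzero,0)), h; reflexivity.
  - repeat split.
    + intros x a b h1 h2. injection h1; injection h2; intros; subst; reflexivity.
    + intros x a y b h1 h2. injection h1; injection h2; intros; subst. rewrite vadd_0. f_equal; ring.
    + intros s x a h1. injection h1; intros; subst. rewrite vscal_zero. f_equal; ring.
    + intros x a h1. injection h1; intros; subst. exact p0. }
assert (Atot : forall x0, exists a, A (x0, a)).
{ intros x0. apply NNPP; intro nx0.
  assert (nA : forall a, ~ A (x0, a)) by (intros a h; apply nx0; exists a; exact h).
  set (E := fun r => exists x a, A (x,a) /\ r = a - p (vsub x x0)).
  assert (Eub : forall r y b, E r -> A (y,b) -> r <= p (vadd y x0) - b).
  { intros r y b [x [a [Axa ->]]] Ayb.
    pose proof (Gdom _ _ (Gadd _ _ _ _ Axa Ayb)) as h.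
    assert (e : vadd x y = vadd (vsub x x0) (vadd y x0)).
    { unfold vsub. rewrite vadd_ACA, vopp_l, vadd_0; reflexivity. }
    rewrite e in h. pose proof (Hsub (vsub x x0) (vadd y x0)). lra. }
  destruct (completeness E) as [c [cub club]].
  { exists (p (vadd vzero x0) - 0). intros r Er. apply (Eub r vzero 0 Er A0). }
  { exists (0 - p (vsub vzero x0)). exists vzero, 0. split; auto. }
  assert (cge : forall x a, A (x,a) -> a - p (vsub x x0) <= c).
  { intros x a Axa. apply cub. exists x, a; split; auto. }
  assert (cle : forall y b, A (y,b) -> c <= p (vadd y x0) - b).
  { intros y b Ayb. apply club. intros r Er. apply (Eub r y b Er Ayb). }
  set (B := fun z : Y * R => exists x a t, A (x,a) /\ z = (vadd x (vscal t x0), a + t*c)).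
  apply (HA B).
  - intros [x a] Axa. exists x, a, 0. split; auto. rewrite vscal_0, vadd_0. f_equal; ring.
  - intros h. apply (nA c). apply h. exists vzero, 0, 1. split; auto.
    rewrite vadd_0l, vscal_1. f_equal; ring.
  - repeat split.
    + intros w a' b' [x [a [t [Axa e1]]]] [y [b [s [Ayb e2]]]].
      injection e1; injection e2; intros; subst.
      match goal with H : _ = _ |- _ => rename H into Hw end.
      pose proof (vmove _ _ _ _ (eq_sym Hw)) as Hm.
      rewrite (vopp_scal _ (vscal s x0)), vscal_assoc, vscal_sum in Hm.
      destruct (Req_dec t s) as [ts|ts].
      * subst s. replace (t + -1 * t) with 0 in Hm by ring. rewrite vscal_0 in Hm.
        assert (xy : y = x).
        { rewrite <- (vadd_0 _ y), <- (vopp_l _ x), vadd_assoc, Hm, vadd_0l; reflexivity. }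
        subst y. rewrite (Gfun x a b Axa Ayb). reflexivity.
      * exfalso. apply (nA (/(t - s) * (b + -1 * a))).
        replace x0 with (vscal (/(t-s)) (vadd y (vopp x))).
        { apply Gscal. apply Gadd; auto. rewrite vopp_scal. apply Gscal; auto. }
        rewrite Hm, vscal_assoc. replace (/ (t - s) * (t + -1 * s)) with 1 by (field; lra).
        apply vscal_1.
    + intros w a' y' b' [x [a [t [Axa e1]]]] [y [b [s [Ayb e2]]]].
      injection e1; injection e2; intros; subst.
      exists (vadd x y), (a+b), (t+s). split; auto.
      rewrite vadd_ACA, vscal_sum. f_equal; ring.
    + intros r w a' [x [a [t [Axa e1]]]]. injection e1; intros; subst.
      exists (vscal r x), (r*a), (r*t). split; auto.
      rewrite vscal_distr_l, vscal_assoc. f_equal; ring.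
    + intros w a' [x [a [t [Axa e1]]]]. injection e1; intros; subst.
      destruct (Rtotal_order t 0) as [tn|[t0|tp]].
      * set (s := - t).
        assert (sp : 0 < s) by (unfold s; lra).
        pose proof (cge _ _ (Gscal (/s) x a Axa)) as h.
        pose proof (Hhom s (vsub (vscal (/s) x) x0) sp) as h2.
        assert (e : vscal s (vsub (vscal (/ s) x) x0) = vadd x (vscal t x0)).
        { unfold vsub. rewrite vscal_distr_l, vscal_assoc, vscal_opp, vopp_scal, vscal_assoc.
          replace (s * / s) with 1 by (field; lra). rewrite vscal_1.
          f_equal. f_equal. unfold s; ring. }
        rewrite e in h2.
        assert (h3 : s * (/ s * a - p (vsub (vscal (/ s) x) x0)) <= s * c) by (apply Rmult_le_compat_l; lra).
        replace (s * (/ s * a - p (vsub (vscal (/ s) x) x0))) with (a - s * p (vsub (vscal (/ s) x) x0)) in h3 by (field; lra).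
        unfold s in *. lra.
      * subst t. rewrite vscal_0, vadd_0, Rmult_0_l, Rplus_0_r. apply (Gdom _ _ Axa).
      * pose proof (cle _ _ (Gscal (/t) x a Axa)) as h.
        pose proof (Hhom t (vadd (vscal (/t) x) x0) tp) as h2.
        assert (e : vscal t (vadd (vscal (/ t) x) x0) = vadd x (vscal t x0)).
        { rewrite vscal_distr_l, vscal_assoc.
          replace (t * / t) with 1 by (field; lra). rewrite vscal_1. reflexivity. }
        rewrite e in h2.
        assert (h3 : t * c <= t * (p (vadd (vscal (/ t) x) x0) - / t * a)) by (apply Rmult_le_compat_l; lra).
        replace (t * (p (vadd (vscal (/ t) x) x0) - / t * a)) with (t * p (vadd (vscal (/ t) x) x0) - a) in h3 by (field; lra).
        lra. }
set (f := fun x => epsilon (inhabits 0) (fun a => A (x, a))).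
assert (fA : forall x, A (x, f x)).
{ intros x. unfold f. apply (epsilon_spec (inhabits 0) (fun a => A (x,a))). apply Atot. }
exists f. repeat split.
- intros x y. apply (Gfun (vadd x y)); auto.
- intros a x. apply (Gfun (vscal a x)); auto.
- intros x. apply Gdom; auto.
Qed.
End HB.

Lemma Rdiv_le0c (a b : R) : 0 <= a -> 0 < b -> 0 <= a / b.
Proof. intros; unfold Rdiv; apply Rmult_le_pos; [|left; apply Rinv_0_lt_compat]; auto. Qed.

Lemma Rsup_spec (E : R -> Prop) (b : R) (e0 : R) :
  E e0 -> (forall r, E r -> r <= b) ->
  is_lub E (epsilon (inhabits 0) (fun s => is_lub E s)).
Proof.
intros He0 Hb. apply (epsilon_spec (inhabits 0) (fun s => is_lub E s)).
destruct (completeness E) as [m Hm].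
- exists b. intros r Er; auto.
- exists e0; auto.
- exists m; exact Hm.
Qed.

Theorem lemma4p1 (Y : NormedSpace) (K : Y -> Prop) (alpha : R -> R) (k0 : Y)
  (Phi : R -> Y)
  (HY : is_Banach Y)
  (HKcone : is_cone K) (HKconv : is_convex K) (HKclosed : is_closed K)
  (HKnormal : is_normal K)
  (Halpha_nonneg : forall t, 0 <= t -> 0 <= alpha t)
  (Halpha_mono : forall s t, 0 <= s -> s <= t -> alpha s <= alpha t)
  (Halpha_lim : lim_0plus (fun t => alpha t / t) 0)
  (Hk0 : K k0)
  (H1 : forall t, 0 < t -> K (Phi t))
  (H2 : forall t1 t, 0 < t1 -> t1 < t ->
          K (vadd (vsub (Phi t) (Phi t1)) (vscal (alpha t1 / t1) k0)))
  (H3 : weak_lim_0plus_zero Phi) :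
  lim_0plus (fun t => vnorm (Phi t)) 0.
Proof.
intros eps epsp.
destruct HKnormal as [cN [cNp Hn]].
pose proof (vnorm_ge0 _ k0) as nk0.
set (m := eps / (2 * cN * (1 + vnorm k0))).
assert (mp : m > 0) by (unfold m; apply Rdiv_lt_0_compat; nra).
set (d := eps / (2 * cN)).
assert (dp : d > 0) by (unfold d; apply Rdiv_lt_0_compat; nra).
destruct (Halpha_lim m mp) as [d0 [d0p Hd0]].
set (D := fun y => exists s, s > 0 /\ forall u, 0 < u < s ->
            K (vadd (vsub y (Phi u)) (vscal (alpha u / u) k0))).
destruct (classic (exists y, D y /\ vnorm y < d)) as [[y [[s [sp Hs]] ny]] | nex].
- exists (Rmin s d0). split; [apply Rmin_pos; lra|].
  intros u [u0 us].
  assert (us1 : u < s) by (eapply Rlt_le_trans; [exact us| apply Rmin_l]).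
  assert (ud0 : u < d0) by (eapply Rlt_le_trans; [exact us| apply Rmin_r]).
  set (cu := alpha u / u).
  assert (cu0 : 0 <= cu) by (unfold cu; apply Rdiv_le0c; [apply Halpha_nonneg|]; lra).
  assert (cum : cu < m).
  { pose proof (Hd0 u (conj u0 ud0)) as h. simpl in h. rewrite Rminus_0_r, Rabs_pos_eq in h; auto. }
  assert (hn : vnorm (Phi u) <= cN * vnorm (vadd y (vscal cu k0))).
  { apply Hn.
    - unfold cone_le. rewrite vsub_0r. apply H1; lra.
    - unfold cone_le, vsub. rewrite vadd_AC. apply (Hs u); lra. }
  pose proof (vnorm_triangle _ y (vscal cu k0)) as ht.
  rewrite vnorm_scal, Rabs_pos_eq in ht by lra.
  rewrite Rminus_0_r, Rabs_pos_eq by apply vnorm_ge0.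
  assert (e1 : cN * d = eps / 2) by (unfold d; field; lra).
  assert (e2 : cN * m * (1 + vnorm k0) = eps / 2) by (unfold m; field; lra).
  assert (h4 : cu * vnorm k0 <= m * vnorm k0) by (apply Rmult_le_compat_r; lra).
  assert (h5 : cN * (vnorm y + cu * vnorm k0) < cN * (d + m * (1 + vnorm k0))).
  { apply Rmult_lt_compat_l; nra. }
  nra.
- exfalso.
  assert (Dge : forall y, D y -> d <= vnorm y).
  { intros y Dy. destruct (Rle_lt_dec d (vnorm y)); auto. exfalso; apply nex; eauto. }
  assert (DPhi : forall t, 0 < t -> D (Phi t)).
  { intros t tp. exists t. split; auto. intros u [u0 ut]. apply H2; auto. }
  assert (Dconv : forall y1 y2 l, D y1 -> D y2 -> 0 <= l <= 1 ->
             D (vadd (vscal l y1) (vscal (1 - l) y2))).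
  { intros y1 y2 l [s1 [s1p Hs1]] [s2 [s2p Hs2]] hl.
    exists (Rmin s1 s2). split; [apply Rmin_pos; lra|].
    intros u [u0 us].
    assert (us1 : u < s1) by (eapply Rlt_le_trans; [exact us| apply Rmin_l]).
    assert (us2 : u < s2) by (eapply Rlt_le_trans; [exact us| apply Rmin_r]).
    pose proof (HKconv _ _ l (Hs1 u (conj u0 us1)) (Hs2 u (conj u0 us2)) hl) as h.
    replace (vadd (vsub (vadd (vscal l y1) (vscal (1 - l) y2)) (Phi u)) (vscal (alpha u / u) k0))
      with (vadd (vscal l (vadd (vsub y1 (Phi u)) (vscal (alpha u / u) k0)))
                 (vscal (1 - l) (vadd (vsub y2 (Phi u)) (vscal (alpha u / u) k0)))); auto.
    unfold vsub. rewrite !vscal_distr_l, vadd_ACA, (vadd_ACA _ (vscal l y1)), !vscal_sum.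
    replace (l + (1 - l)) with 1 by ring. rewrite !vscal_1. reflexivity. }
  set (E := fun x r => exists l y, 0 <= l /\ D y /\ r = l * d - vnorm (vadd x (vscal l y))).
  assert (Eub : forall x r, E x r -> r <= vnorm x).
  { intros x r [l [y [l0 [Dy ->]]]].
    pose proof (Dge y Dy).
    pose proof (vnorm_triangle _ (vadd x (vscal l y)) (vopp x)) as h.
    rewrite vadd_AC, vadd_opp, vadd_0l, vnorm_opp, vnorm_scal, Rabs_pos_eq in h by lra.
    nra. }
  assert (Ex : forall x, E x (- vnorm x)).
  { intros x. exists 0, (Phi 1). split; [lra|]. split; [apply DPhi; lra|].
    rewrite vscal_0, vadd_0. ring. }
  set (S := fun x => epsilon (inhabits 0) (fun s => is_lub (E x) s)).
  assert (HS : forall x, is_lub (E x) (S x)).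
  { intros x. apply (Rsup_spec (E x) (vnorm x) (- vnorm x)); auto. }
  assert (Sge : forall x r, E x r -> r <= S x) by (intros x r h; apply (proj1 (HS x)); auto).
  assert (Sle : forall x b, (forall r, E x r -> r <= b) -> S x <= b)
    by (intros x b h; apply (proj2 (HS x)); intros r Er; auto).
  set (p := fun x => - S x).
  assert (psub : forall x z, p (vadd x z) <= p x + p z).
  { intros x z. unfold p.
    assert (core : forall e1 e2, E x e1 -> E z e2 -> e1 + e2 <= S (vadd x z)).
    { intros e1 e2 [l1 [y1 [l10 [Dy1 ->]]]] [l2 [y2 [l20 [Dy2 ->]]]].
      destruct (Req_dec (l1 + l2) 0) as [L0|L0].
      - assert (l1 = 0) by lra. assert (l2 = 0) by lra. subst.
        rewrite !vscal_0, !vadd_0.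
        pose proof (vnorm_triangle _ x z).
        pose proof (Sge (vadd x z) _ (Ex (vadd x z))). lra.
      - set (L := l1 + l2).
        assert (Lp : 0 < L) by (unfold L; lra).
        set (y := vadd (vscal (l1 / L) y1) (vscal (1 - l1 / L) y2)).
        assert (Dy : D y).
        { apply Dconv; auto. split; [apply Rdiv_le0c; lra|].
          apply (Rmult_le_reg_r L); [lra|]. unfold Rdiv. rewrite Rmult_assoc, Rinv_l; unfold L; lra. }
        assert (ey : vscal L y = vadd (vscal l1 y1) (vscal l2 y2)).
        { unfold y. rewrite vscal_distr_l, !vscal_assoc. f_equal; f_equal; unfold L; field; lra. }
        assert (inE : E (vadd x z) (L * d - vnorm (vadd (vadd x z) (vscal L y)))).
        { exists L, y. split; [lra|]. split; auto. }
        pose proof (Sge _ _ inE) as h.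
        rewrite ey, vadd_ACA in h.
        pose proof (vnorm_triangle _ (vadd x (vscal l1 y1)) (vadd z (vscal l2 y2))).
        unfold L in h. lra. }
    assert (h1 : forall e2, E z e2 -> S x <= S (vadd x z) - e2).
    { intros e2 Ez. apply Sle. intros r Er. pose proof (core r e2 Er Ez). lra. }
    assert (h2 : S z <= S (vadd x z) - S x).
    { apply Sle. intros r Er. pose proof (h1 r Er). lra. }
    lra. }
  assert (phom : forall t x, 0 < t -> t * p x <= p (vscal t x)).
  { intros t x tp. unfold p.
    assert (S (vscal t x) <= t * S x).
    { apply Sle. intros r [l [y [l0 [Dy ->]]]].
      assert (inE : E x ((l / t) * d - vnorm (vadd x (vscal (l / t) y)))).
      { exists (l / t), y. split; [apply Rdiv_le0c; lra|]. split; auto. }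
      pose proof (Sge _ _ inE) as h.
      assert (e : vadd (vscal t x) (vscal l y) = vscal t (vadd x (vscal (l / t) y))).
      { rewrite vscal_distr_l, vscal_assoc. f_equal. f_equal. field; lra. }
      rewrite e, vnorm_scal, Rabs_pos_eq by lra.
      assert (h' : t * (l / t * d - vnorm (vadd x (vscal (l / t) y))) <= t * S x)
        by (apply Rmult_le_compat_l; lra).
      replace (t * (l / t * d - vnorm (vadd x (vscal (l / t) y)))) with
        (l * d - t * vnorm (vadd x (vscal (l / t) y))) in h' by (field; lra).
      lra. }
    lra. }
  destruct (hahn_banach Y p psub phom) as [f [fadd [fscal fle]]].
  assert (fnorm : forall x, f x <= vnorm x).
  { intros x. pose proof (fle x). pose proof (Sge x _ (Ex x)). unfold p in *. lra. }
  assert (fopp : forall x, f (vopp x) = - f x).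
  { intros x. rewrite vopp_scal, fscal. ring. }
  assert (fD : forall y, D y -> d <= f y).
  { intros y Dy. pose proof (fle (vopp y)) as h.
    assert (inE : E (vopp y) (1 * d - vnorm (vadd (vopp y) (vscal 1 y)))).
    { exists 1, y. split; [lra|]. split; auto. }
    pose proof (Sge _ _ inE) as h2.
    rewrite vscal_1, vopp_l, vnorm_zero in h2. rewrite fopp in h. unfold p in h. lra. }
  assert (fcl : is_cont_linear_functional f).
  { split; [exact fadd|]. split; [exact fscal|]. exists 1. intros x.
    apply Rabs_le. pose proof (fnorm x). pose proof (fnorm (vopp x)) as h.
    rewrite fopp, vnorm_opp in h. lra. }
  destruct (H3 f fcl d dp) as [dl [dlp Hdl]].
  pose proof (Hdl (dl / 2) ltac:(lra)) as h. simpl in h.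
  assert (hp : 0 < dl / 2) by lra. pose proof (fD (Phi (dl / 2)) (DPhi (dl / 2) hp)).
  rewrite Rminus_0_r in h. apply Rabs_def2 in h. lra.
Qed.
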